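(* Let $X$ be a completely regular Hausdorff space and let $A(X)$ be an adequate subspace of $C(X)$. Then $\hat{A}_b(X)=\{\hat f: f\in A_b(X)\}$ is a subspace of $C(\mathcal{A}X)$ that precisely separates points from closed sets in $\mathcal{A}X$.
   Context: All functions are real-valued; $C(X)$ is the continuous real functions on $X$, $1_X$ the constant $1$. A subspace $A(Z)\subseteq C(Z)$ separates points from closed sets if for every $z\in Z$ and closed $F\subseteq Z$ with $z\notin F$ there is $f\in A(Z)$ with $f(z)=1$ and $f=0$ on $F$; it does so precisely if such $f$ can always be chosen with values in $[0,1]$. $A(X)$ is adequate if (a) it separates points from closed sets and contains the constant functions; (b) there is a continuous nondecreasing $g:\mathbb{R}\to\mathbb{R}$ with $g(t)=0$ for $t\le0$, $g(t)=1$ for $t\ge1$, and $g\circ f\in A(X)$ for all $f\in A(X)$; (c) every $f\in A(X)$ is $f_1-f_2$ with $f_1,f_2\in A(X)$ nonnegative. The $A(X)$-compactification $\mathcal{A}X$ is the closure of the image of the embedding $i:X\to[-\infty,\infty]^{A(X)}$, $i(x)(\varphi)=\varphi(x)$, in the product of copies of $[-\infty,\infty]$ (order topology); $X$ is identified with $i(X)$. For $f\in A(X)$, $\hat f:\mathcal{A}X\to[-\infty,\infty]$, $\hat f(x)=x(f)$, is the continuous extension of $f$. $A_b(X)$ denotes the bounded functions in $A(X)$; for $f\in A_b(X)$, $\hat f$ is real-valued and continuous on $\mathcal{A}X$. *)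

(* Defs.v *)
From HB Require Import structures.
From mathcomp Require Import all_boot all_order all_algebra.
From mathcomp Require Import all_classical all_reals all_analysis.
Set Implicit Arguments. Unset Strict Implicit. Unset Printing Implicit Defensive.
Import Order.TTheory GRing.Theory Num.Theory.
Import numFieldNormedType.Exports.
Local Open Scope classical_set_scope.
Local Open Scope ring_scope.

Section Adequate.
Variables (R : realType) (X : topologicalType).

Definition is_subspace_C (A : set (X -> R)) : Prop :=
  [/\ (forall f, A f -> continuous f),
      A (fun _ => 0) &
      (forall (a : R) f g, A f -> A g -> A (fun x => a * f x + g x))].

Definition separates_points_closed (A : set (X -> R)) : Prop :=
  forall (z : X) (F : set X), closed F -> ~ F z ->
    exists f, A f /\ f z = 1 /\ (forall y, F y -> f y = 0).

Definition contains_constants (A : set (X -> R)) : Prop :=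
  forall c : R, A (fun _ => c).

Definition adequate (A : set (X -> R)) : Prop :=
  [/\ separates_points_closed A /\ contains_constants A,
      (exists g : R -> R,
          [/\ continuous g, {homo g : s t / s <= t},
              (forall t, t <= 0 -> g t = 0),
              (forall t, 1 <= t -> g t = 1) &
              (forall f, A f -> A (g \o f))]) &
      (forall f, A f -> exists f1 f2, [/\ A f1, A f2,
          (forall x, 0 <= f1 x), (forall x, 0 <= f2 x) &
          (forall x, f x = f1 x - f2 x)])].

Definition Aidx (A : set (X -> R)) : Type := sig (fun f : X -> R => A f).

Definition Aprod (A : set (X -> R)) : topologicalType :=
  prod_topology (fun _ : Aidx A => \bar R).

Definition Aemb (A : set (X -> R)) (x : X) : Aprod A :=
  fun phi : Aidx A => ((proj1_sig phi) x)%:E.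

Definition Acompact (A : set (X -> R)) : set (Aprod A) := closure (range (@Aemb A)).

Definition ahat (A : set (X -> R)) (phi : Aidx A) (x : Aprod A) : \bar R := x phi.

(* \hat A_b(X) as real-valued functions on the product (only their
   restriction to the compactification matters) *)
Definition Ahat_b (A : set (X -> R)) : set (Aprod A -> R) :=
  [set h | exists phi : Aidx A, bounded_fun (proj1_sig phi) /\
                                h = fun x => fine (ahat phi x)].
End Adequate.

Arguments is_subspace_C {R X} A.
Arguments separates_points_closed {R X} A.
Arguments contains_constants {R X} A.
Arguments adequate {R X} A.
Arguments Aidx {R X} A.
Arguments Aprod {R X} A.
Arguments Aemb {R X} A x.
Arguments Acompact {R X} A.
Arguments ahat {R X A} phi x.
Arguments Ahat_b {R X} A.

(* Main.v *)
Require Import Defs.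
From HB Require Import structures.
From mathcomp Require Import all_boot all_order all_algebra.
From mathcomp Require Import all_classical all_reals all_analysis.
From Stdlib Require List.
From mathcomp Require Import ring lra.
Import Order.TTheory GRing.Theory Num.Theory.
Import numFieldNormedType.Exports.
Local Open Scope classical_set_scope.
Local Open Scope ring_scope.
Set Implicit Arguments. Unset Strict Implicit.
Section S0.
Variables (R : realType) (X : topologicalType) (A : set (X -> R)).
Lemma in_In (T : eqType) (s : seq T) x : x \in s -> List.In x s.
Proof. elim: s => [//|y s IH]; rewrite inE => /orP [/eqP ->|/IH ?]; [by left|by right]. Qed.

Lemma In_in (T : eqType) (s : seq T) x : List.In x s -> x \in s.
Proof. elim: s => [//|y s IH] /= [->|/IH H]; rewrite inE; first by rewrite eqxx. by rewrite H orbT. Qed.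

Lemma basic_seq (z : Aprod A) (s : seq (set (Aprod A))) :
  (forall M, List.In M s -> M z /\ exists p : Aidx A * set (\bar R), open p.2 /\ M = (fun x : Aprod A => p.2 (x p.1))) ->
  exists l : seq (Aidx A * set (\bar R)),
   (forall p, List.In p l -> open p.2 /\ p.2 (z p.1)) /\
   (forall x : Aprod A, (forall p, List.In p l -> p.2 (x p.1)) -> forall M, List.In M s -> M x).
Proof.
elim: s => [_|M s IH H]; first by exists nil; split.
have [l [l1 l2]] : exists l : seq (Aidx A * set (\bar R)),
   (forall p, List.In p l -> open p.2 /\ p.2 (z p.1)) /\
   (forall x : Aprod A, (forall p, List.In p l -> p.2 (x p.1)) -> forall M, List.In M s -> M x).
  by apply: IH => M' M's; apply: H; right.
have [Mz [p [op Mp]]] := H M (or_introl erefl).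
exists (p :: l); split.
  move=> q [<-|ql]; last exact: l1.
  by split => //; move: Mz; rewrite Mp.
move=> x Hx M' [<-|M's].
  by rewrite Mp; apply: Hx; left.
by apply: l2 => // q ql; apply: Hx; right.
Qed.

Lemma basic_nbhs (z : Aprod A) (U : set (Aprod A)) : nbhs z U ->
  exists l : seq (Aidx A * set (\bar R)),
   (forall p, List.In p l -> open p.2 /\ p.2 (z p.1)) /\
   (forall x : Aprod A, (forall p, List.In p l -> p.2 (x p.1)) -> U x).
Proof.
move=> [] P [] oP Pz PU. case: oP =>  Q QfinP E.
rewrite -E in Pz. case: Pz => V QV Vz.
have [L Lsub VL] := QfinP _ QV.
case: (@basic_seq z (finmap.enum_fset L)) => [M ML|l [l1 l2]]; last first.
  exists l; split => // x Hx; apply: PU; rewrite -E.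
  exists V; first done. simpl. rewrite -VL => M ML; apply: l2 => //. by apply: in_In.
have ML' := @In_in _ (finmap.enum_fset L) M ML.
split; first by move: Vz; rewrite /= -VL; apply.
have := Lsub _ ML'.
rewrite inE /= => -[i _ [N oN NM]].
exists (i, N); split => //; rewrite -NM.
Qed.
End S0.

Section S.
Variables (R : realType) (X : topologicalType) (A : set (X -> R)).

Lemma proj_nbhs (x : Aprod A) (phi : Aidx A) (N : set (\bar R)) :
  open N -> N (x phi) -> nbhs x (fun y : Aprod A => N (y phi)).
Proof.
move=> oN Nx.
have := (@cvg_sup _ _ _ (nbhs x) x _).1 cvg_id phi.
apply. apply: open_nbhs_nbhs; split => //. exists N => //.
Qed.

Lemma proj_cvg (x : Aprod A) (phi : Aidx A) :
  (fun y : Aprod A => y phi) @ x --> x phi.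
Proof.
move=> W /=; rewrite nbhsE => -[N [oN Nx] NW].
rewrite nbhs_simpl /=. apply: (@filterS _ _ _ (fun y : Aprod A => N (y phi))); first by move=> y /= /NW. exact: proj_nbhs.
Qed.

Lemma proj_open (phi : Aidx A) (N : set (\bar R)) :
  open N -> open (fun y : Aprod A => N (y phi)).
Proof. by move=> oN; rewrite openE => y Ny; apply: proj_nbhs. Qed.

Lemma closure_meet (x : Aprod A) (S : set (Aprod A)) :
  Acompact A x -> nbhs x S -> exists p, S (Aemb A p).
Proof. by move=> Hx /Hx [_ [[p _ <-] Sp]]; exists p. Qed.

Lemma bounded_get (f : X -> R) : bounded_fun f -> exists M, forall x, `|f x| <= M.
Proof.
move=> [M [_ HM]]; exists (M + 1) => x; apply: (HM (M + 1)) => //.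
by rewrite ltrDl.
Qed.

Lemma bounded_mk (f : X -> R) M : (forall x, `|f x| <= M) -> bounded_fun f.
Proof.
move=> HM; exists M; split; first exact: num_real.
by move=> N MN x _; apply: le_trans (HM x) _; apply: ltW.
Qed.

End S.
Section T.
Variables (R : realType) (X : topologicalType) (A : set (X -> R)).
Local Open Scope ereal_scope.
Lemma hat_bound (phi : Aidx A) M : (forall p, `|proj1_sig phi p| <= M)%R ->
  forall x, Acompact A x -> (- M)%:E <= x phi <= M%:E.
Proof.
move=> HM x Hx; apply/andP; split.
  rewrite leNgt; apply/negP => Mx.
  have [p] := closure_meet Hx (proj_nbhs (@open_ereal_lt_ereal _ (- M)%:E) Mx).
  rewrite /Aemb /= lte_fin; have := HM p; rewrite ler_norml => /andP [h _].
  by rewrite ltNge h.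
rewrite leNgt; apply/negP => Mx.
have [p] := closure_meet Hx (proj_nbhs (@open_ereal_gt_ereal _ M%:E) Mx).
rewrite /Aemb /= lte_fin; have := HM p; rewrite ler_norml => /andP [_ h].
by rewrite ltNge h.
Qed.

Lemma hat_fin (phi : Aidx A) : bounded_fun (proj1_sig phi) ->
  forall x, Acompact A x -> x phi \is a fin_num.
Proof.
move=> /bounded_get [M HM] x Hx; have /andP [h1 h2] := hat_bound HM Hx.
rewrite fin_numElt; apply/andP; split.
  by apply: lt_le_trans h1; rewrite ltNyr.
by rewrite (le_lt_trans h2) // ltry.
Qed.

Lemma hat_cont (phi : Aidx A) : bounded_fun (proj1_sig phi) ->
  forall x, Acompact A x -> {for x, continuous (fun y : Aprod A => fine (y phi))}.
Proof.
move=> bphi x Hx; have /fineK fx := hat_fin bphi Hx.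
have H := @proj_cvg _ _ _ x phi.
rewrite -fx in H.
exact: (fine_cvg H).
Qed.
End T.
Section U.
Variables (R : realType) (X : topologicalType) (A : set (X -> R)).
Lemma zlemma (O : set (Aprod A)) (g : Aprod A -> R) (C : set R) :
  open O -> closed C -> (forall x, Acompact A x -> O x -> {for x, continuous g}) ->
  (forall p, O (Aemb A p) -> C (g (Aemb A p))) -> forall x, Acompact A x -> O x -> C (g x).
Proof.
move=> oO cC gc gC x Hx Ox; apply: contrapT => nC.
have N1 : nbhs x (g @^-1` (~` C)).
  apply: (gc x Hx Ox); apply: open_nbhs_nbhs; split => //; by rewrite openC.
have N2 : nbhs x O by apply: open_nbhs_nbhs.
have [p [Op nCp]] := closure_meet Hx (filterI N2 N1).
exact: nCp (gC p Op).
Qed.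

Lemma hat1 (phi psi : Aidx A) (O : set (\bar R)) (C : set R) :
  bounded_fun (proj1_sig psi) -> open O -> closed C ->
  (forall p, O ((proj1_sig phi p)%:E) -> C (proj1_sig psi p)) ->
  forall y, Acompact A y -> O (y phi) -> C (fine (y psi)).
Proof.
move=> bpsi oO cC H y Hy Oy.
apply: (@zlemma (fun y : Aprod A => O (y phi)) (fun y : Aprod A => fine (y psi)) C) => //.
- exact: proj_open.
- by move=> x Hx _; apply: hat_cont.
Qed.
End U.
Section V.
Variables (R : realType) (X : topologicalType) (A : set (X -> R)).
Local Notation AX := (Acompact A).

Lemma closed_eqR (c : R) : closed [set t : R | t <= c /\ c <= t].
Proof. by apply: closedI; [apply: closed_le|apply: closed_ge]. Qed.

Lemma closed_01 : closed [set t : R | 0 <= t /\ t <= 1].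
Proof. by apply: closedI; [apply: closed_ge|apply: closed_le]. Qed.

Lemma hat_const (phi : Aidx A) (c : R) : (forall p, proj1_sig phi p = c) ->
  forall x, AX x -> fine (x phi) = c.
Proof.
move=> Hc x Hx.
have bphi : bounded_fun (proj1_sig phi).
  by apply: (@bounded_mk _ _ _ `|c|) => p; rewrite Hc.
have [h1 h2] : fine (x phi) <= c /\ c <= fine (x phi).
  apply: (hat1 (phi:=phi) (psi:=phi) (O:=setT) bphi openT (closed_eqR (c:=c))) => //.
  by move=> p _; rewrite Hc.
by apply/le_anti/andP.
Qed.

Lemma hat_lin (phi1 phi2 phi3 : Aidx A) (a : R) :
  bounded_fun (proj1_sig phi1) -> bounded_fun (proj1_sig phi2) ->
  bounded_fun (proj1_sig phi3) ->
  (forall p, proj1_sig phi3 p = a * proj1_sig phi1 p + proj1_sig phi2 p) ->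
  forall x, AX x -> fine (x phi3) = a * fine (x phi1) + fine (x phi2).
Proof.
move=> b1 b2 b3 H x Hx.
pose g := fun x : Aprod A => fine (x phi3) - (a * fine (x phi1) + fine (x phi2)).
have gc : forall y, AX y -> setT y -> {for y, continuous g}.
  move=> y Hy _.
  have c1 := hat_cont b1 Hy. have c2 := hat_cont b2 Hy. have c3 := hat_cont b3 Hy.
  exact: (cvgB c3 (cvgD (cvgMr (a:=a) c1) c2)).
have gC : forall p, setT (Aemb A p) -> [set t : R | t <= 0 /\ 0 <= t] (g (Aemb A p)).
  by move=> p _; rewrite /g /= H subrr lexx.
have [h1 h2] := zlemma openT (closed_eqR (c:=0)) gc gC Hx I.
by apply/eqP; rewrite -subr_eq0; apply/eqP/le_anti; rewrite h1 h2.
Qed.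
End V.
Section W.
Variables (R : realType) (X : topologicalType) (A : set (X -> R)).
Local Notation AX := (Acompact A).
Variables (g0 : R -> R).
Hypothesis Alin : forall (a : R) f g, A f -> A g -> A (fun x => a * f x + g x).
Hypothesis constA : forall c : R, A (fun _ => c).
Hypothesis g0A : forall f, A f -> A (g0 \o f).
Hypothesis g0l : forall t, t <= 0 -> g0 t = 0.
Hypothesis g0u : forall t, 1 <= t -> g0 t = 1.
Hypothesis g0h : {homo g0 : s t / s <= t}.

Lemma g01 t : 0 <= g0 t <= 1.
Proof.
apply/andP; split.
  have [t0|t0] := leP t 0; first by rewrite g0l.
  by rewrite -(g0l (lexx 0)); apply: g0h; apply: ltW.
have [t1|t1] := leP 1 t; first by rewrite g0u.
by rewrite -(g0u (lexx 1)); apply: g0h; apply: ltW.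
Qed.

Lemma kfun_gen (phi : Aidx A) (a b : R) :
  exists psi : Aidx A, bounded_fun (proj1_sig psi) /\
    (forall p, proj1_sig psi p = g0 (a * proj1_sig phi p + b)) /\
    (forall y, AX y -> 0 <= fine (y psi) <= 1).
Proof.
have A1 := Alin a (proj2_sig phi) (constA b).
have A2 := g0A A1.
have bpsi : bounded_fun (proj1_sig (exist _ _ A2 : Aidx A)).
  apply: (@bounded_mk _ _ _ 1) => p /=.
  by have /andP [h1 h2] := g01 (a * sval phi p + b); rewrite ger0_norm.
exists (exist _ _ A2); split => //; split => // y Hy.
have [h1 h2] : 0 <= fine (y (exist _ _ A2 : Aidx A)) /\ fine (y (exist _ _ A2 : Aidx A)) <= 1.
  refine (hat1 (phi:=phi) (O:=setT) bpsi openT (@closed_01 R) _ Hy I) => p _ /=.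
  by have /andP [h1 h2] := g01 (a * sval phi p + b).
by rewrite h1 h2.
Qed.

Local Open Scope ereal_scope.
Lemma kfun_dec (phi : Aidx A) (c d : R) : (0 < d)%R ->
 exists psi : Aidx A, [/\ bounded_fun (proj1_sig psi),
   (forall y, AX y -> (0 <= fine (y psi) <= 1)%R),
   (forall y, AX y -> y phi < (c - d)%:E -> fine (y psi) = 1%R) &
   (forall y, AX y -> c%:E < y phi -> fine (y psi) = 0%R)].
Proof.
move=> d0.
have [psi [bpsi [Hpsi rng]]] := kfun_gen phi (- d^-1) (c / d).
have key p : proj1_sig psi p = g0 ((c - proj1_sig phi p) / d).
  by rewrite Hpsi; congr g0; ring.
exists psi; split => // y Hy Hyl.
  have [h1 h2] : (fine (y psi) <= 1 /\ 1 <= fine (y psi))%R.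
    apply: (hat1 (phi:=phi) (O:=[set t | t < (c - d)%:E]) bpsi (@open_ereal_lt_ereal _ _) (closed_eqR (c:=1))) => // p /=.
    rewrite lte_fin key => hp; rewrite g0u ?lexx //.
    by rewrite ler_pdivlMr // mul1r; lra.
  by apply/le_anti; rewrite h1 h2.
have [h1 h2] : (fine (y psi) <= 0 /\ 0 <= fine (y psi))%R.
  apply: (hat1 (phi:=phi) (O:=[set t | c%:E < t]) bpsi (@open_ereal_gt_ereal _ _) (closed_eqR (c:=0))) => // p /=.
  rewrite lte_fin key => hp; rewrite g0l ?lexx //.
  by rewrite ler_pdivrMr // mul0r; lra.
by apply/le_anti; rewrite h1 h2.
Qed.

Lemma kfun_inc (phi : Aidx A) (c d : R) : (0 < d)%R ->
 exists psi : Aidx A, [/\ bounded_fun (proj1_sig psi),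
   (forall y, AX y -> (0 <= fine (y psi) <= 1)%R),
   (forall y, AX y -> (c + d)%:E < y phi -> fine (y psi) = 1%R) &
   (forall y, AX y -> y phi < c%:E -> fine (y psi) = 0%R)].
Proof.
move=> d0.
have [psi [bpsi [Hpsi rng]]] := kfun_gen phi (d^-1) (- c / d).
have key p : proj1_sig psi p = g0 ((proj1_sig phi p - c) / d).
  by rewrite Hpsi; congr g0; ring.
exists psi; split => // y Hy Hyl.
  have [h1 h2] : (fine (y psi) <= 1 /\ 1 <= fine (y psi))%R.
    apply: (hat1 (phi:=phi) (O:=[set t | (c + d)%:E < t]) bpsi (@open_ereal_gt_ereal _ _) (closed_eqR (c:=1))) => // p /=.
    rewrite lte_fin key => hp; rewrite g0u ?lexx //.
    by rewrite ler_pdivlMr // mul1r; lra.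
  by apply/le_anti; rewrite h1 h2.
have [h1 h2] : (fine (y psi) <= 0 /\ 0 <= fine (y psi))%R.
  apply: (hat1 (phi:=phi) (O:=[set t | t < c%:E]) bpsi (@open_ereal_lt_ereal _ _) (closed_eqR (c:=0))) => // p /=.
  rewrite lte_fin key => hp; rewrite g0l ?lexx //.
  by rewrite ler_pdivrMr // mul0r; lra.
by apply/le_anti; rewrite h1 h2.
Qed.
End W.
Section Y.
Variables (R : realType) (X : topologicalType) (A : set (X -> R)).
Local Notation AX := (Acompact A).
Variables (g0 : R -> R).
Hypothesis Alin : forall (a : R) f g, A f -> A g -> A (fun x => a * f x + g x).
Hypothesis constA : forall c : R, A (fun _ => c).
Hypothesis g0A : forall f, A f -> A (g0 \o f).
Hypothesis g0l : forall t, t <= 0 -> g0 t = 0.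
Hypothesis g0u : forall t, 1 <= t -> g0 t = 1.
Hypothesis g0h : {homo g0 : s t / s <= t}.
Variable z : Aprod A.
Hypothesis Hz : AX z.

Definition Qp (V : set (Aprod A)) := exists (s : Aidx A) (n : R),
  [/\ bounded_fun (proj1_sig s), fine (z s) = n,
      (forall y, AX y -> fine (y s) <= n) &
      (forall y, AX y -> ~ V y -> fine (y s) <= n - 1)].

Lemma Q_mono V1 V2 : V1 `<=` V2 -> Qp V1 -> Qp V2.
Proof.
move=> V12 [s [n [b1 z1 u1 v1]]]; exists s, n; split => // y Hy nV.
by apply: v1 => // /V12.
Qed.

Lemma Q_T : Qp setT.
Proof.
pose s : Aidx A := exist _ _ (constA 0).
have hs y : AX y -> fine (y s) = 0 by apply: hat_const.
exists s, 0; split => //; last by move=> y _ [].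
- by apply: (@bounded_mk _ _ _ 0) => p; rewrite normr0.
- by rewrite (hs _ Hz).
- by move=> y Hy; rewrite (hs _ Hy).
Qed.

Lemma sum_fun (s1 s2 : Aidx A) : bounded_fun (proj1_sig s1) -> bounded_fun (proj1_sig s2) ->
  exists s3 : Aidx A, bounded_fun (proj1_sig s3) /\
    forall y, AX y -> fine (y s3) = fine (y s1) + fine (y s2).
Proof.
move=> b1 b2.
have A3 := Alin 1 (proj2_sig s1) (proj2_sig s2).
pose s3 : Aidx A := exist _ _ A3.
have b3 : bounded_fun (proj1_sig s3).
  have [M1 H1] := bounded_get b1; have [M2 H2] := bounded_get b2.
  apply: (@bounded_mk _ _ _ (M1 + M2)) => p /=; rewrite mul1r.
  by apply: le_trans (ler_normD _ _) _; apply: lerD.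
exists s3; split => // y Hy.
by rewrite (hat_lin (phi1:=s1) (phi2:=s2) (phi3:=s3) (a:=1) b1 b2 b3) ?mul1r.
Qed.

Lemma Q_I V1 V2 : Qp V1 -> Qp V2 -> Qp (V1 `&` V2).
Proof.
move=> [s1 [n1 [b1 z1 u1 v1]]] [s2 [n2 [b2 z2 u2 v2]]].
have [s3 [b3 hl]] := sum_fun b1 b2.
exists s3, (n1 + n2); split => //.
- by rewrite hl // z1 z2.
- by move=> y Hy; rewrite hl //; apply: lerD; [apply: u1|apply: u2].
- move=> y Hy nV; rewrite hl //.
  have [V1y|nV1] := pselect (V1 y).
    have nV2 : ~ V2 y by move=> V2y; apply: nV.
    have := u1 y Hy; have := v2 y Hy nV2; lra.
  have := v1 y Hy nV1; have := u2 y Hy; lra.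
Qed.

Lemma Q_two V (psi1 psi2 : Aidx A) :
  bounded_fun (proj1_sig psi1) -> bounded_fun (proj1_sig psi2) ->
  (forall y, AX y -> 0 <= fine (y psi1) <= 1) ->
  (forall y, AX y -> 0 <= fine (y psi2) <= 1) ->
  fine (z psi1) = 1 -> fine (z psi2) = 1 ->
  (forall y, AX y -> ~ V y -> fine (y psi1) = 0 \/ fine (y psi2) = 0) -> Qp V.
Proof.
move=> b1 b2 r1 r2 z1 z2 H.
have [s3 [b3 hl]] := sum_fun b1 b2.
exists s3, 2; split => //.
- by rewrite hl // z1 z2.
- move=> y Hy; rewrite hl //.
  have /andP [h1 h2] := r1 y Hy; have /andP [h3 h4] := r2 y Hy; lra.
- move=> y Hy nV; rewrite hl //.
  have /andP [h1 h2] := r1 y Hy; have /andP [h3 h4] := r2 y Hy.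
  case: (H y Hy nV) => ->; lra.
Qed.

Lemma Q_single (phi : Aidx A) (N : set (\bar R)) :
  open N -> N (z phi) -> Qp [set x | N (x phi)].
Proof.
move=> oN Nz.
have nb : nbhs (z phi) N by apply: open_nbhs_nbhs; split.
pose c1 : Aidx A := exist _ _ (constA 1).
have bc1 : bounded_fun (proj1_sig c1).
  by apply: (@bounded_mk _ _ _ 1) => p; rewrite normr1.
have hc1 y : AX y -> fine (y c1) = 1 by apply: hat_const.
case E: (z phi) nb => [r| |] nb.
- have : nbhs r (fun t : R => N t%:E) := nb.
  move/nbhs_ballP => [e e0 He].
  have e4 : 0 < e / 4 by apply: divr_gt0.
  have [psi1 [b1 r1 o1 z1]] := kfun_dec Alin constA g0A g0l g0u g0h phi (r + e / 2) e4.
  have [psi2 [b2 r2 o2 z2]] := kfun_inc Alin constA g0A g0l g0u g0h phi (r - e / 2) e4.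
  apply: (Q_two b1 b2 r1 r2).
  + by apply: o1 => //; rewrite E lte_fin; lra.
  + by apply: o2 => //; rewrite E lte_fin; lra.
  + move=> y Hy /= nN.
    have [h1|h1] := ltP (r + e / 2)%:E (y phi); first by left; apply: z1.
    have [h2|h2] := ltP (y phi) (r - e / 2)%:E; first by right; apply: z2.
    exfalso; apply: nN; move: h1 h2; case: (y phi) => [t| |] //=.
    + rewrite !lee_fin => h1 h2; apply: He; rewrite /ball /= ltr_norml; apply/andP; split; lra.
- case: nb => M [Mr HM].
  have [psi1 [b1 r1 o1 z1]] := kfun_inc Alin constA g0A g0l g0u g0h phi (M + 1) ltr01.
  apply: (Q_two b1 bc1 r1).
  + by move=> y Hy; rewrite hc1 // ler01 lexx.
  + by apply: o1 => //; rewrite E ltry.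
  + exact: hc1.
  + move=> y Hy /= nN; left; apply: z1 => //.
    have : ~ (M%:E < y phi)%E by move=> /HM.
    move/negP; rewrite -leNgt => h; apply: le_lt_trans h _.
    by rewrite lte_fin ltrDl.
- case: nb => M [Mr HM].
  have [psi1 [b1 r1 o1 z1]] := kfun_dec Alin constA g0A g0l g0u g0h phi (M - 1) ltr01.
  apply: (Q_two b1 bc1 r1).
  + by move=> y Hy; rewrite hc1 // ler01 lexx.
  + by apply: o1 => //; rewrite E ltNyr.
  + exact: hc1.
  + move=> y Hy /= nN; left; apply: z1 => //.
    have : ~ (y phi < M%:E)%E by move=> /HM.
    move/negP; rewrite -leNgt => h; apply: lt_le_trans h.
    by rewrite lte_fin ltrBlDr ltrDl.
Qed.

Lemma Q_list (l : seq (Aidx A * set (\bar R))) :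
  (forall p, List.In p l -> open p.2 /\ p.2 (z p.1)) ->
  Qp [set x | forall p, List.In p l -> p.2 (x p.1)].
Proof.
elim: l => [_|p l IH H].
  by apply: Q_mono Q_T => x _ p [].
apply: (@Q_mono ([set x | p.2 (x p.1)] `&` [set x | forall q, List.In q l -> q.2 (x q.1)])).
  by move=> x [h1 h2] q [<-|ql] //; apply: h2.
apply: Q_I.
  case: (H p (or_introl erefl)) => op zp; exact: Q_single.
by apply: IH => q ql; apply: H; right.
Qed.
End Y.

Unset Implicit Arguments.

Theorem lemma3p3 (R : realType) (X : topologicalType)
    (hX : hausdorff_space X) (crX : completely_regular_space X)
    (A : set (X -> R)) (hA : is_subspace_C A) (adA : adequate A) :
  let AX := Acompact A in
  (* each \hat f, f in A_b(X), is real-valued and continuous on AX *)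
  (forall phi : Aidx A, bounded_fun (proj1_sig phi) ->
     (forall x, AX x -> ahat phi x \is a fin_num) /\
     {within AX, continuous (fun x => fine (ahat phi x))}) /\
  (* \hat A_b(X) is a linear subspace of C(AX) *)
  (exists h0, Ahat_b A h0 /\ forall x, AX x -> h0 x = 0) /\
  (forall (a : R) h1 h2, Ahat_b A h1 -> Ahat_b A h2 ->
     exists h3, Ahat_b A h3 /\ forall x, AX x -> h3 x = a * h1 x + h2 x) /\
  (* \hat A_b(X) precisely separates points from closed sets of AX *)
  (forall (z : Aprod A) (F : set (subspace AX)),
     AX z -> closed F -> F `<=` AX -> ~ F z ->
     exists h, Ahat_b A h /\ h z = 1 /\ (forall y, F y -> h y = 0) /\
               (forall y, AX y -> 0 <= h y <= 1)).

Proof.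
move=> AX.
case: adA => [[sepA constA] [g0 [g0c g0h g0l g0u g0A]] decA].
case: hA => contA A0 Alin.
split.
  move=> phi bphi; split; first by move=> x Hx; exact: hat_fin.
  apply: continuous_in_subspaceT => x /set_mem Hx; exact: hat_cont.
split.
  pose phi0 : Aidx A := exist _ _ A0.
  have b0 : bounded_fun (proj1_sig phi0).
    by apply: (@bounded_mk _ _ _ 0) => p; rewrite normr0.
  exists (fun x => fine (ahat phi0 x)); split; first by exists phi0.
  by move=> x Hx; rewrite /ahat (hat_const (phi:=phi0) (c:=0)).
split.
  move=> a h1 h2 [phi1 [b1 ->]] [phi2 [b2 ->]].
  have A3 := Alin a _ _ (proj2_sig phi1) (proj2_sig phi2).
  pose phi3 : Aidx A := exist _ _ A3.
  have b3 : bounded_fun (proj1_sig phi3).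
    have [M1 H1] := bounded_get b1; have [M2 H2] := bounded_get b2.
    apply: (@bounded_mk _ _ _ (`|a| * M1 + M2)) => p /=.
    apply: le_trans (ler_normD _ _) _; apply: lerD => //.
    by rewrite normrM; apply: ler_wpM2l.
  exists (fun x => fine (ahat phi3 x)); split; first by exists phi3.
  move=> x Hx; rewrite /ahat.
  exact: (hat_lin (phi1:=phi1) (phi2:=phi2) (phi3:=phi3) (a:=a) b1 b2 b3).
move=> z F Hz cF FAX nFz.
have : open (~` F : set (subspace AX)) by rewrite openC.
move/open_subspaceP => [V oV VF].
have Vz : V z.
  have : (V `&` AX) z by rewrite VF.
  by case.
have [l [l1 l2]] : exists l : seq (Aidx A * set (\bar R)),
   (forall p, List.In p l -> open p.2 /\ p.2 (z p.1)) /\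
   (forall x : Aprod A, (forall p, List.In p l -> p.2 (x p.1)) -> V x).
  by apply: basic_nbhs; apply: open_nbhs_nbhs; split.
have Q := Q_list Alin constA g0A g0l g0u g0h Hz l1.
have [s [n [bs zs us vs]]] := Q_mono l2 Q.
have [psi [bpsi [Hpsi rng]]] := kfun_gen Alin constA g0A g0l g0u g0h s 1 (1 - n).
have key y : AX y -> fine (y psi) = g0 (1 * fine (y s) + (1 - n)).
  move=> Hy.
  pose g := (fun y : Aprod A => fine (y psi)) -
     (g0 \o ((fun y : Aprod A => 1 * fine (y s)) + (fun=> 1 - n))).
  have gc : forall y, AX y -> setT y -> {for y, continuous g}.
    move=> y' Hy' _.
    have c1 := hat_cont bpsi Hy'. have c2 := hat_cont bs Hy'.
    exact: (cvgB c1 (continuous_comp (cvgD (cvgMr (a:=1) c2) (cvg_cst (1 - n))) (g0c _))).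
  have gC : forall p, setT (Aemb A p) -> [set t : R | t <= 0 /\ 0 <= t] (g (Aemb A p)).
    move=> p _; have -> : g (Aemb A p) = fine ((sval psi p)%:E) - g0 (1 * fine ((sval s p)%:E) + (1 - n)) by []. by rewrite /= Hpsi subrr lexx.
  have [h1 h2] := zlemma openT (closed_eqR (c:=0)) gc gC Hy I.
  by apply/eqP; rewrite -subr_eq0; apply/eqP/le_anti; rewrite h1 h2.
exists (fun x => fine (ahat psi x)); split; first by exists psi.
rewrite /ahat; split.
  by rewrite key // zs mul1r g0u //; lra.
split.
  move=> y Fy; have Hy := FAX y Fy.
  have nVy : ~ V y.
    move=> Vy; have : (V `&` AX) y by split.
    by rewrite VF => -[].
  by rewrite key // mul1r g0l //; have := vs y Hy nVy; lra.
move=> y Hy; rewrite key //; exact: g01.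
Qed.
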